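(* Let $T$ be an $n\times n$ complex matrix with distinct eigenvalues $\lambda_1,\dots,\lambda_n$. Let $u_1,\dots,u_n$ be unit eigenvectors of $T$ with $Tu_i=\lambda_iu_i$, and let $v_1,\dots,v_n$ be unit eigenvectors of $T^*$ with $T^*v_i=\overline{\lambda_i}v_i$. If there exist complex numbers $\alpha_1,\dots,\alpha_n$ of modulus one such that \[ \langle u_i,u_j\rangle=\overline{\alpha_i}\,\alpha_j\,\langle v_j,v_i\rangle \] for all $1\le i<j\le n$, then $T$ is unitarily equivalent to a complex symmetric matrix.
   Context: $\langle\cdot,\cdot\rangle$ is the standard inner product on $\mathbb{C}^n$, linear in the first argument. A complex symmetric matrix is a square complex matrix $S$ with $S=S^t$. Two matrices $A,B\in M_n(\mathbb{C})$ are unitarily equivalent if $A=W^*BW$ for some unitary $W$. *)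

(* Defs.v *)
From mathcomp Require Import all_boot all_algebra.
From mathcomp Require Export reals complex.
Set Implicit Arguments. Unset Strict Implicit. Unset Printing Implicit Defensive.
Import GRing.Theory Num.Theory.
Local Open Scope ring_scope.

Section Defs.
Variable C : numClosedFieldType.

(* standard inner product on C^n, linear in the first argument *)
Definition inner (n : nat) (x y : 'cV[C]_n) : C := \sum_(k < n) x k 0 * (y k 0)^*.

Definition adjmx (m n : nat) (A : 'M[C]_(m, n)) : 'M[C]_(n, m) := (map_mx Num.conj A)^T.

Definition unit_vec (n : nat) (x : 'cV[C]_n) : Prop := inner x x = 1.

Definition unitary_mx (n : nat) (W : 'M[C]_n) : Prop :=
  adjmx W *m W = 1%:M /\ W *m adjmx W = 1%:M.

Definition complex_symmetric (n : nat) (S : 'M[C]_n) : Prop := S^T = S.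

Definition unitarily_equiv (n : nat) (A B : 'M[C]_n) : Prop :=
  exists W : 'M[C]_n, unitary_mx W /\ A = adjmx W *m B *m W.
End Defs.

(* Main.v *)
Require Import Defs.
From mathcomp Require Import all_boot all_algebra reals complex.
Import GRing.Theory Num.Theory Num.Def.
Set Implicit Arguments. Unset Strict Implicit.
Local Open Scope ring_scope.
Local Open Scope sesquilinear_scope.

Section Gen.
Variable C : numClosedFieldType.
Local Notation cj := (map_mx (@conjC C)).

Lemma cK m n (A : 'M[C]_(m, n)) : cj (cj A) = A.
Proof. by apply/matrixP=> i j; rewrite !mxE conjCK. Qed.

Lemma cM m n p (A : 'M[C]_(m, n)) (B : 'M[C]_(n, p)) :
  cj (A *m B) = cj A *m cj B.
Proof. exact: map_mxM. Qed.

Lemma adjE m n (A : 'M[C]_(m, n)) : adjmx A = (cj A)^T.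
Proof. by []. Qed.

Lemma adjE2 m n (A : 'M[C]_(m, n)) : adjmx A = map_mx conjC A^T.
Proof. by rewrite adjE map_trmx. Qed.

Lemma adjM m n p (A : 'M[C]_(m, n)) (B : 'M[C]_(n, p)) :
  adjmx (A *m B) = adjmx B *m adjmx A.
Proof. by rewrite !adjE cM trmx_mul. Qed.

Lemma adjK m n (A : 'M[C]_(m, n)) : adjmx (adjmx A) = A.
Proof. by rewrite !adjE -map_trmx trmxK cK. Qed.

Lemma adj_diag n (d : 'rV[C]_n) : adjmx (diag_mx d) = diag_mx (cj d).
Proof. by rewrite adjE map_diag_mx tr_diag_mx. Qed.

Lemma inner_adj n (x y : 'cV[C]_n) : inner x y = (adjmx y *m x) 0 0.
Proof. by rewrite /inner mxE; apply: eq_bigr => k _; rewrite !mxE mulrC. Qed.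

Lemma eig_indep n (T : 'M[C]_n) (lam : 'I_n -> C) (U : 'M[C]_n) :
  injective lam -> (forall k, exists r, U r k != 0) ->
  T *m U = U *m diag_mx (\row_k lam k) -> U \in unitmx.
Proof.
case: n T lam U => [|n] T lam U lamI Unz TU.
  by rewrite unitmxE det_mx00 unitr1.
have key : forall c : 'cV_n.+1, U *m c = 0 -> c = 0.
  move=> c Uc; apply/matrixP => i z; rewrite (ord1 z) mxE.
  have hp : forall p, horner_mx T p *m U = U *m horner_mx (diag_mx (\row_k lam k)) p.
    elim/poly_ind => [|p a ihp]; first by rewrite !rmorph0 mul0mx mulmx0.
    rewrite !rmorphD !rmorphM /= !horner_mx_X !horner_mx_C.
    rewrite mulmxDl mulmxDr.
    idtac.
    congr (_ + _); last by rewrite scalar_mxC.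
    by rewrite -!mulmxE -mulmxA TU mulmxA ihp mulmxA.
  pose p := \prod_(k | k != i) ('X - (lam k)%:P).
  have := congr1 (mulmx (horner_mx T p)) Uc.
  rewrite mulmx0 mulmxA hp horner_mx_diag => /matrixP H.
  have [r Hr] := Unz i.
  have := H r 0; rewrite !mxE (bigD1 i) //= big1; last first.
    move=> j ji; rewrite mul_mx_diag !mxE horner_prod.
    rewrite (bigD1 j) //= hornerXsubC subrr mul0r mulr0 mul0r //.
  rewrite addr0 mul_mx_diag !mxE horner_prod => /eqP.
  rewrite !mulf_eq0 (negPf Hr) /= => /orP [|/eqP //].
  move=> hz; exfalso; move: hz; apply/negP/prodf_neq0 => k ki.
  rewrite hornerXsubC subr_eq0; apply: contra ki => /eqP /lamI ->; done.
rewrite unitmxE unitfE -det_tr; apply/negP => /det0P [v vnz vU].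
have := key v^T; rewrite -{1}(trmxK U) -trmx_mul vU trmx0 => /(_ erefl) /(congr1 trmx).
by rewrite trmxK trmx0 => v0; rewrite v0 eqxx in vnz.
Qed.

Lemma unit_sym n (P : 'M[C]_n) : P *m adjmx P = 1%:M -> adjmx P *m P = 1%:M.
Proof. exact: mulmx1C. Qed.

Lemma fc_uniq n (P Q : 'M[C]_n) (d : 'rV[C]_n) (f : C -> C) :
  P *m adjmx P = 1%:M -> Q *m adjmx Q = 1%:M ->
  adjmx P *m diag_mx d *m P = adjmx Q *m diag_mx d *m Q ->
  adjmx P *m diag_mx (map_mx f d) *m P = adjmx Q *m diag_mx (map_mx f d) *m Q.
Proof.
move=> hP hQ E.
have PP := unit_sym hP; have QQ := unit_sym hQ.
set X := Q *m adjmx P.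
have XD : X *m diag_mx d = diag_mx d *m X.
  have := congr1 (fun Y => Q *m Y *m adjmx P) E.
  rewrite /X !mulmxA hQ mul1mx -!mulmxA hP mulmx1 => ->.
  by rewrite !mulmxA.
have XP : X *m P = Q by rewrite /X -mulmxA PP mulmx1.
have XQ : adjmx Q *m X = adjmx P by rewrite /X mulmxA QQ mul1mx.
clearbody X.
have XF : X *m diag_mx (map_mx f d) = diag_mx (map_mx f d) *m X.
  apply/matrixP => i j; rewrite mul_mx_diag mul_diag_mx !mxE.
  move/matrixP: XD => /(_ i j); rewrite mul_mx_diag mul_diag_mx !mxE.
  have [->|Xn0] := eqVneq (X i j) 0; first by rewrite !mulr0 !mul0r.
  by rewrite [d 0 i * _]mulrC => /(mulfI Xn0) ->; rewrite mulrC.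
transitivity (adjmx Q *m diag_mx (map_mx f d) *m (X *m P)); last by rewrite XP.
by rewrite mulmxA -(mulmxA (adjmx Q)) -XF mulmxA XQ.
Qed.

Lemma sym_unitary_sqrt n (M : 'M[C]_n) : M *m adjmx M = 1%:M -> M^T = M ->
  exists N : 'M[C]_n, [/\ N *m adjmx N = 1%:M, N^T = N & N *m N = M].
Proof.
move=> hM MT.
have MM := unit_sym hM.
have nM : M \is normalmx by apply/normalmxP; rewrite -adjE2 hM MM.
have E := orthomx_spectralP nM.
set P := spectralmx M in E; set d := spectral_diag M in E.
have Pu : P *m adjmx P = 1%:M.
  by rewrite adjE2; apply/unitarymxP; exact: spectral_unitarymx.
have PP := unit_sym Pu.
rewrite invmx_unitary ?spectral_unitarymx // -adjE2 in E.
have dd : forall i, d 0 i * (d 0 i)^* = 1.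
  move=> i.
  have : diag_mx d *m adjmx (diag_mx d) = 1%:M.
    have -> : diag_mx d = P *m M *m adjmx P.
      by rewrite E !mulmxA Pu mul1mx -mulmxA Pu mulmx1.
    rewrite !adjM adjK !mulmxA -(mulmxA _ _ P) PP mulmx1 -(mulmxA _ M) hM mulmx1 Pu //.
  move=> /matrixP /(_ i i); rewrite adj_diag mul_diag_mx !mxE eqxx !mulr1n //.
set s := map_mx sqrtC d.
have ss : forall i, s 0 i * (s 0 i)^* = 1.
  move=> i; rewrite -normCK /s mxE.
  have nd : `|d 0 i| = 1.
    apply/eqP; rewrite -sqrp_eq1 ?normr_ge0 // normCK dd //.
  by rewrite -normrX sqrtCK nd.
exists (adjmx P *m diag_mx s *m P); split.
- rewrite !adjM adjK !mulmxA -(mulmxA _ P (adjmx P)) Pu mulmx1.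
  rewrite -(mulmxA (adjmx P)) adj_diag.
  have -> : diag_mx s *m diag_mx (map_mx conjC s) = 1%:M.
    apply/matrixP => i j; rewrite mul_diag_mx !mxE.
    by case: eqVneq => [->|_]; rewrite ?mulr1n ?mulr0n ?mulr0 //; have := ss j; rewrite /s mxE.
  by rewrite mulmx1 PP.
- have adjQ : adjmx (map_mx conjC P) = P^T by rewrite adjE cK.
  have adjPT : (adjmx P)^T = map_mx conjC P by rewrite adjE trmxK.
  have Qu : map_mx conjC P *m adjmx (map_mx conjC P) = 1%:M.
    by rewrite adjQ -[P in P^T]cK map_trmx -adjE -cM Pu map_mx1.
  have EQ : adjmx P *m diag_mx d *m P = adjmx (map_mx conjC P) *m diag_mx d *m map_mx conjC P.
    by rewrite -E -{1}MT E !trmx_mul tr_diag_mx adjPT adjQ mulmxA.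
  have H := fc_uniq sqrtC Pu Qu EQ; rewrite -/s in H; rewrite [RHS]H.
  by rewrite !trmx_mul tr_diag_mx adjPT adjQ mulmxA.
- rewrite !mulmxA -(mulmxA _ P (adjmx P)) Pu mulmx1 -(mulmxA (adjmx P)).
  have -> : diag_mx s *m diag_mx s = diag_mx d.
    apply/matrixP => i j; rewrite mul_diag_mx !mxE.
    by case: eqVneq => [->|_]; rewrite ?mulr1n ?mulr0n ?mulr0 // -expr2 sqrtCK.
  by rewrite E.
Qed.

Lemma innerC n (x y : 'cV[C]_n) : (inner x y)^* = inner y x.
Proof.
rewrite /inner rmorph_sum; apply: eq_bigr => k _.
by rewrite rmorphM /= conjCK mulrC.
Qed.

Lemma main n (T : 'M[C]_n) (lam : 'I_n -> C) (u v : 'I_n -> 'cV[C]_n) (alpha : 'I_n -> C) :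
  injective lam ->
  (forall k, unit_vec (u k)) ->
  (forall k, T *m u k = lam k *: u k) ->
  (forall k, unit_vec (v k)) ->
  (forall k, adjmx T *m v k = (lam k)^* *: v k) ->
  (forall k, `|alpha k| = 1) ->
  (forall i j : 'I_n, (i < j)%N ->
     inner (u i) (u j) = (alpha i)^* * alpha j * inner (v j) (v i)) ->
  exists S : 'M[C]_n, complex_symmetric S /\ unitarily_equiv T S.
Proof.
move=> lamI hu1 hu hv1 hv ha hij.
have hall : forall i j, inner (u i) (u j) = (alpha i)^* * alpha j * inner (v j) (v i).
  move=> i j; case: (ltngtP i j) => [lt|gt|/val_inj ->].
  - exact: hij.
  - have := congr1 conjC (hij _ _ gt); rewrite !innerC => ->.
    by rewrite !rmorphM /= conjCK innerC [alpha j * _]mulrC.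
  - rewrite (hu1 j : inner _ _ = 1) (hv1 j : inner _ _ = 1) mulr1 mulrC -normCK ha expr1n //.
pose U := \matrix_(i, k) u k i 0.
pose V := \matrix_(i, k) v k i 0.
pose L := diag_mx (\row_k lam k).
pose D := diag_mx (\row_k alpha k).
have hTU : T *m U = U *m L.
  apply/matrixP=> i k; rewrite mul_mx_diag !mxE mulrC.
  move: (hu k) => /matrixP /(_ i 0); rewrite !mxE => <-.
  by apply: eq_bigr => j _; rewrite mxE.
have hTV : adjmx T *m V = V *m cj L.
  apply/matrixP=> i k; rewrite map_diag_mx mul_mx_diag !mxE mulrC.
  move: (hv k) => /matrixP /(_ i 0); rewrite !mxE => <-.
  by apply: eq_bigr => j _; rewrite [V _ _]mxE.
pose X := adjmx V *m U.
have XE : X = adjmx V *m U by [].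
have LX : L *m X = X *m L.
  rewrite XE -mulmxA -hTU !mulmxA.
  have -> : adjmx V *m T = L *m adjmx V.
    by rewrite -[T]adjK -(adjM (adjmx T) V) hTV adjM /L map_diag_mx adj_diag cK.
  by [].
clearbody X.
have hX : forall i j, i != j -> X i j = 0.
  move=> i j ij; move/matrixP: LX => /(_ i j); rewrite mul_diag_mx mul_mx_diag !mxE => E.
  apply/eqP; apply: contraTT ij => Xn0; rewrite negbK; apply/eqP/lamI; apply: (mulfI Xn0).
  by rewrite mulrC E.
have Uu : U \in unitmx.
  apply: (eig_indep lamI _ hTU) => k.
  have : ~~ [forall r, U r k == 0].
    apply/negP => /forallP H; have := hu1 k; rewrite /unit_vec /inner big1 => [/esym/eqP|r _].
      by rewrite oner_eq0.
    by have := H r; rewrite mxE => /eqP ->; rewrite mul0r.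
  by rewrite negb_forall => /existsP [r Hr]; exists r.
have G : cj (adjmx U *m U) = adjmx D *m (adjmx V *m V) *m D.
  apply/matrixP => i j; rewrite /D adj_diag mul_mx_diag mul_diag_mx.
  transitivity (inner (u i) (u j)).
    rewrite mxE /inner mxE raddf_sum; apply: eq_bigr => k _.
    by rewrite !mxE /= rmorphM /= conjCK mulrC.
  rewrite hall /inner !mxE [RHS]mulrAC; congr (_ * _).
  by apply: eq_bigr => k _; rewrite !mxE mulrC.
have adj1 : forall m, adjmx (1%:M : 'M[C]_m) = 1%:M.
  by move=> m; rewrite adjE map_mx1 trmx1.
pose Ub := cj U.
have Ubu : Ub \in unitmx by rewrite map_unitmx.
have cadj : cj (adjmx U) = adjmx Ub by apply/matrixP => i j; rewrite !mxE.
pose M := V *m D *m invmx Ub.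
have hMu : adjmx M *m M = 1%:M.
  transitivity (adjmx (invmx Ub) *m (adjmx D *m (adjmx V *m V) *m D) *m invmx Ub).
    by rewrite /M !adjM !mulmxA.
  rewrite -G cM cadj !mulmxA -adjM -mulmxA mulmxV // adj1 mulmx1 //.
have hMu' : M *m adjmx M = 1%:M by apply: mulmx1C.
have E1 : M *m Ub = V *m D by rewrite /M -mulmxA mulVmx // mulmx1.
have hMT : M *m cj T = adjmx T *m M.
  apply: (can_inj (mulmxK Ubu)).
  rewrite -mulmxA -cM hTU cM -/Ub mulmxA E1.
  rewrite -[RHS]mulmxA E1 [RHS]mulmxA hTV -!mulmxA; congr (_ *m _).
  by rewrite /L /D map_diag_mx diag_mxC.
have E3 : forall i j, (adjmx Ub *m cj V) i j = X j i.
  move=> i j; rewrite XE !mxE; apply: eq_bigr => k _; rewrite !mxE conjCK mulrC //.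
have E2 : adjmx Ub *m cj (V *m D) = adjmx D *m X.
  apply/matrixP => i j; rewrite cM mulmxA /D map_diag_mx adj_diag mul_mx_diag mul_diag_mx.
  rewrite mxE [RHS]mxE E3 !mxE.
  have [->|ij] := eqVneq i j; first by rewrite mulrC.
  by rewrite (hX _ _ ij) (hX j i) ?mulr0 ?mul0r // eq_sym.
have hAU : adjmx M *m U = cj (V *m D).
  rewrite /M !adjM -!mulmxA -[adjmx V *m U]XE -E2 mulmxA -adjM mulmxV // adj1 mul1mx //.
have hMMb : M *m cj M = 1%:M.
  have -> : cj M = cj (V *m D) *m invmx U.
    by rewrite /M cM map_invmx /Ub cK.
  by rewrite mulmxA -hAU mulmxA hMu' mul1mx mulmxV.
have cMadj : cj M = adjmx M.
  by rewrite -[cj M]mul1mx -hMu -mulmxA hMMb mulmx1.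
have hMsym : M^T = M.
  apply/matrixP => i j; move/matrixP: cMadj => /(_ j i); rewrite !mxE.
  by move=> /(congr1 conjC); rewrite !conjCK => <-.
have [N [hNu hNT hNN]] := sym_unitary_sqrt hMu' hMsym.
have adjN : adjmx N = cj N by rewrite adjE map_trmx hNT.
have hNu2 : N *m cj N = 1%:M by rewrite -adjN.
have hNu3 : cj N *m N = 1%:M by apply: mulmx1C.
have hMMb' : cj M *m M = 1%:M by apply: mulmx1C.
have TT : T^T = cj M *m T *m M.
  have h : cj M *m T = T^T *m cj M.
    have cT : cj (adjmx T) = T^T by apply/matrixP=> i j; rewrite !mxE conjCK.
    by have := congr1 cj hMT; rewrite !cM cK cT.
  by rewrite h -mulmxA hMMb' mulmx1.
have cNT : (cj N)^T = cj N by rewrite map_trmx hNT.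
have acN : adjmx (cj N) = N by rewrite adjE cK hNT.
exists (cj N *m T *m N); split.
  rewrite /complex_symmetric !trmx_mul hNT TT cNT -hNN cM !mulmxA hNu2 mul1mx.
  by rewrite -!mulmxA hNu2 mulmx1 mulmxA.
exists (cj N); split; first by split; rewrite acN.
by rewrite acN !mulmxA hNu2 mul1mx -mulmxA hNu2 mulmx1.
Qed.
End Gen.
Local Close Scope sesquilinear_scope.
Unset Implicit Arguments.

Theorem lemma3 (R : realType) (n : nat) (T : 'M[R[i]]_n)
  (lam : 'I_n -> R[i]) (u v : 'I_n -> 'cV[R[i]]_n) (alpha : 'I_n -> R[i]) :
  injective lam ->
  (forall k, unit_vec (u k)) ->
  (forall k, T *m u k = lam k *: u k) ->
  (forall k, unit_vec (v k)) ->
  (forall k, adjmx T *m v k = (lam k)^* *: v k) ->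
  (forall k, `|alpha k| = 1) ->
  (forall i j : 'I_n, (i < j)%N ->
     inner (u i) (u j) = (alpha i)^* * alpha j * inner (v j) (v i)) ->
  exists S : 'M[R[i]]_n, complex_symmetric S /\ unitarily_equiv T S.
Proof. exact: main. Qed.
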